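(* Consider the constrained multivariate linear model described in the context and assume $\mathcal U\supseteq\mathcal E_{\boldsymbol\Sigma}(\mathcal B)$, with the semi-orthogonal bases $\mathbf U=(\boldsymbol\Gamma,\boldsymbol\Gamma_{01})$ and $\boldsymbol\Gamma_0=(\boldsymbol\Gamma_{01},\boldsymbol\Gamma_{02})$ described there. Let $\mathbf c\in\mathbb R^r$ and for an estimator $\widehat{\boldsymbol\beta}$ write $\mathrm{avar}(\sqrt n\,\mathbf c^T\widehat{\boldsymbol\beta})=(\mathbf I_p\otimes\mathbf c^T)\,\mathrm{avar}(\sqrt n\,\mathrm{vec}(\widehat{\boldsymbol\beta}))\,(\mathbf I_p\otimes\mathbf c)$. Then 1. if $\mathbf c\in\mathcal E_{\boldsymbol\Sigma}(\mathcal B)$, then $\mathrm{avar}(\sqrt n\,\mathbf c^T\widehat{\boldsymbol\beta}_{\mathrm{cm}})=\mathrm{avar}(\sqrt n\,\mathbf c^T\widehat{\boldsymbol\beta}_{\mathrm{em}})$; 2. if $\mathbf c\in\mathrm{span}(\boldsymbol\Gamma_{02})$, then $\mathrm{avar}(\sqrt n\,\mathbf c^T\widehat{\boldsymbol\beta}_{\mathrm{cm}})\le\mathrm{avar}(\sqrt n\,\mathbf c^T\widehat{\boldsymbol\beta}_{\mathrm{em}})$; 3. if $\mathbf c\in\mathrm{span}(\boldsymbol\Gamma_{01})$, $\mathrm{rank}(\mathbf M(\boldsymbol\Sigma_{\mathbf X}))=\mathrm{rank}(\boldsymbol\eta\boldsymbol\Sigma_{\mathbf X}\boldsymbol\eta^T\otimes\boldsymbol\Omega_0^{-1})$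 and $\boldsymbol\Omega_{0,12}=0$, then $\mathrm{avar}(\sqrt n\,\mathbf c^T\widehat{\boldsymbol\beta}_{\mathrm{cm}})\ge\mathrm{avar}(\sqrt n\,\mathbf c^T\widehat{\boldsymbol\beta}_{\mathrm{em}})$, where inequalities are in the Loewner order and $$\mathrm{avar}(\sqrt{n}\,\mathrm{vec}(\widehat{\boldsymbol\beta}_{\mathrm{cm}}))=\boldsymbol\Sigma_{\mathbf X}^{-1}\otimes \mathbf U(\mathbf U^T\boldsymbol\Sigma^{-1}\mathbf U)^{-1}\mathbf U^T,$$ $$\mathrm{avar}(\sqrt{n}\,\mathrm{vec}(\widehat{\boldsymbol\beta}_{\mathrm{em}}))=\boldsymbol\Sigma_{\mathbf X}^{-1}\otimes\boldsymbol\Gamma\boldsymbol\Omega\boldsymbol\Gamma^T+(\boldsymbol\eta^T\otimes\boldsymbol\Gamma_0)\,\mathbf M^{\dagger}(\boldsymbol\Sigma_{\mathbf X})\,(\boldsymbol\eta\otimes\boldsymbol\Gamma_0^T).$$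
   Context: Data: for $i=1,\dots,n$, $\mathbf Y_i=\mathbf U\boldsymbol\alpha_0+\mathbf U\boldsymbol\alpha\mathbf X_i+\boldsymbol\varepsilon_i$, where $\mathbf Y_i\in\mathbb R^r$, the predictors $\mathbf X_i\in\mathbb R^p$ are non-stochastic, $\mathbf U\in\mathbb R^{r\times k}$ is a known semi-orthogonal matrix ($\mathbf U^T\mathbf U=\mathbf I_k$), $\boldsymbol\alpha_0\in\mathbb R^k$, $\boldsymbol\alpha\in\mathbb R^{k\times p}$, and the $\boldsymbol\varepsilon_i$ are i.i.d. $N(0,\boldsymbol\Sigma)$ with $\boldsymbol\Sigma>0$. Set $\boldsymbol\beta=\mathbf U\boldsymbol\alpha$, $\mathcal B=\mathrm{span}(\boldsymbol\beta)$, $\mathcal U=\mathrm{span}(\mathbf U)$, and let $\boldsymbol\Sigma_{\mathbf X}$ (positive definite) be the limit of the sample covariance matrix of the $\mathbf X_i$. A subspace $\mathcal R$ reduces the symmetric matrix $\boldsymbol\Sigma$ if $\boldsymbol\Sigma\mathcal R\subseteq\mathcal R$; the $\boldsymbol\Sigma$-envelope $\mathcal E_{\boldsymbol\Sigma}(\mathcal B)$ is the smallest reducing subspace of $\boldsymbol\Sigma$ containing $\mathcal B$. Let $u=\dim\mathcal E_{\boldsymbol\Sigma}(\mathcal B)$, $\boldsymbol\Gamma\in\mathbb R^{r\times u}$ a semi-orthogonal basis of it, $(\boldsymbol\Gamma,\boldsymbol\Gamma_0)$ orthogonal; since $\mathcal U\supseteq\mathcal E_{\boldsymbol\Sigma}(\mathcal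 B)$ these are chosen so that $\mathbf U=(\boldsymbol\Gamma,\boldsymbol\Gamma_{01})$ and $\boldsymbol\Gamma_0=(\boldsymbol\Gamma_{01},\boldsymbol\Gamma_{02})$ are semi-orthogonal. Let $\boldsymbol\eta=\boldsymbol\Gamma^T\boldsymbol\beta$, $\boldsymbol\Omega=\boldsymbol\Gamma^T\boldsymbol\Sigma\boldsymbol\Gamma$, $\boldsymbol\Omega_0=\boldsymbol\Gamma_0^T\boldsymbol\Sigma\boldsymbol\Gamma_0$, partitioned as $\boldsymbol\Omega_0=(\boldsymbol\Omega_{0,ij})_{i,j=1,2}$ conformably with $\boldsymbol\Gamma_0=(\boldsymbol\Gamma_{01},\boldsymbol\Gamma_{02})$, so $\boldsymbol\Omega_{0,12}=\boldsymbol\Gamma_{01}^T\boldsymbol\Sigma\boldsymbol\Gamma_{02}$. For $\mathbf C\in\mathbb R^{p\times p}$, $\mathbf M(\mathbf C)=\boldsymbol\eta\mathbf C\boldsymbol\eta^T\otimes\boldsymbol\Omega_0^{-1}+\boldsymbol\Omega\otimes\boldsymbol\Omega_0^{-1}+\boldsymbol\Omega^{-1}\otimes\boldsymbol\Omega_0-2\mathbf I$; $\dagger$ is the Moore–Penrose inverse. $\widehat{\boldsymbol\beta}_{\mathrm{cm}}$ is the maximum likelihood estimator of $\boldsymbol\beta$ under the constrained model above, and $\widehat{\boldsymbol\beta}_{\mathrm{em}}$ is the maximum likelihood estimator of $\boldsymbol\beta$ under the unconstrained envelope model $\mathbf Y_i=\boldsymbol\beta_0+\boldsymbol\Gamma\boldsymbol\eta\mathbf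 X_i+\boldsymbol\varepsilon_i$, $\boldsymbol\Sigma=\boldsymbol\Gamma\boldsymbol\Omega\boldsymbol\Gamma^T+\boldsymbol\Gamma_0\boldsymbol\Omega_0\boldsymbol\Gamma_0^T$ ($\boldsymbol\Gamma$ unknown, $u$ known, $\mathbf U$ not used); $\sqrt n\,\mathrm{vec}(\widehat{\boldsymbol\beta}-\boldsymbol\beta)$ is asymptotically normal with mean 0 and the displayed covariance matrices. *)

(* Defs.v *)
From HB Require Import structures.
From mathcomp Require Import all_boot all_order all_algebra.
From mathcomp Require Export mxtens.
From mathcomp Require Import boolp reals.
Set Implicit Arguments. Unset Strict Implicit. Unset Printing Implicit Defensive.
Import Order.TTheory GRing.Theory Num.Theory.
Local Open Scope ring_scope.

(* Kronecker product: [A *t B] from mathcomp-real-closed's mxtens, with the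
   standard convention (A (x) B)_{(i,k),(j,l)} = A_{ij} B_{kl}, row index i*p+k. *)

Section Defs.
Variable R : realType.

Definition symmetricmx n (A : 'M[R]_n) : Prop := A^T = A.
Definition posdef n (A : 'M[R]_n) : Prop :=
  symmetricmx A /\ forall v : 'cV[R]_n, v != 0 -> 0 < (v^T *m A *m v) 0 0.
Definition psd n (A : 'M[R]_n) : Prop :=
  symmetricmx A /\ forall v : 'cV[R]_n, 0 <= (v^T *m A *m v) 0 0.

Definition loewner_le n (A B : 'M[R]_n) : Prop := psd (B - A).

Definition penrose m n (A : 'M[R]_(m, n)) (X : 'M[R]_(n, m)) : bool :=
  [&& A *m X *m A == A, X *m A *m X == X,
      (A *m X)^T == A *m X & (X *m A)^T == X *m A].

Definition mpinv m n (A : 'M[R]_(m, n)) : 'M[R]_(n, m) :=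
  match pselect (exists X, penrose A X) with
  | left ex => xchoose ex
  | right _ => 0
  end.

(* column space of [S] (r x s) as a row space: span(S) = rows of S^T.
   [reduces Sig S] : span(S) is a reducing subspace of Sig (Sig span(S) ⊆ span(S)). *)
Definition reduces r s (Sig : 'M[R]_r) (S : 'M[R]_(r, s)) : Prop :=
  ((Sig *m S)^T <= S^T)%MS.

Definition is_envelope r p u (Sig : 'M[R]_r) (B : 'M[R]_(r, p)) (G : 'M[R]_(r, u))
  : Prop :=
  [/\ reduces Sig G, (B^T <= G^T)%MS &
      forall S : 'M[R]_r, reduces Sig S -> (B^T <= S^T)%MS -> (G^T <= S^T)%MS].

Definition Mmat u q p (eta : 'M[R]_(u, p)) (Om : 'M[R]_u) (Om0 : 'M[R]_q)
  (C : 'M[R]_p) : 'M[R]_(u * q) :=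
  (eta *m C *m eta^T) *t invmx Om0 + Om *t invmx Om0 + invmx Om *t Om0
  - 2%:R%:M.

Definition avar_c p r (c : 'cV[R]_r) (A : 'M[R]_(p * r)) : 'M[R]_(p * 1) :=
  ((1%:M : 'M[R]_p) *t c^T) *m A *m ((1%:M : 'M[R]_p) *t c).

End Defs.

(* Main.v *)
Require Import Defs.
From HB Require Import structures.
From mathcomp Require Import all_boot all_order all_algebra.
From mathcomp Require Import mxtens.
From mathcomp Require Import boolp reals.
From mathcomp Require Import ring lra.
Set Implicit Arguments. Unset Strict Implicit. Unset Printing Implicit Defensive.
Import Order.TTheory GRing.Theory Num.Theory.
Local Open Scope ring_scope.

Section Helpers.
Variable R : realType.

Lemma sqr_row_ge0 n (v : 'rV[R]_n) : 0 <= (v *m v^T) 0 0.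
Proof. rewrite mxE; apply: sumr_ge0 => i _; rewrite mxE; by rewrite -expr2 sqr_ge0. Qed.

Lemma sqr_row_eq0 n (v : 'rV[R]_n) : (v *m v^T) 0 0 = 0 -> v = 0.
Proof.
rewrite mxE => /eqP; rewrite psumr_eq0 => [/allP H|i _]; last by rewrite mxE -expr2 sqr_ge0.
apply/matrixP => i j; rewrite [i]ord1 mxE.
have := H j (mem_index_enum _); rewrite mxE /= => /eqP/eqP.
by rewrite mulf_eq0 orbb => /eqP.
Qed.

Lemma inv_uniq n (A B : 'M[R]_n) : A \in unitmx -> A *m B = 1%:M -> invmx A = B.
Proof. by move=> uA AB; rewrite -[RHS](mulKmx uA) AB mulmx1. Qed.

Lemma invmxM n (A B : 'M[R]_n) : A \in unitmx -> B \in unitmx ->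
  invmx (A *m B) = invmx B *m invmx A.
Proof.
move=> uA uB; apply: inv_uniq; first by rewrite unitmx_mul uA.
by rewrite -mulmxA (mulmxA B) mulmxV // mul1mx mulmxV.
Qed.

Lemma pd_unit n (P : 'M[R]_n) : posdef P -> P \in unitmx.
Proof.
case=> sP pP; rewrite unitmxE unitfE; apply/negP => /det0P [v nv vP].
have : v^T != 0 by apply: contra nv => /eqP /(congr1 trmx); rewrite trmxK trmx0 => ->.
move=> /pP; rewrite trmxK vP mul0mx mxE; lra.
Qed.


Lemma quad_gram n m (F : 'M[R]_(n, m)) (v : 'cV_n) :
  v^T *m (F *m F^T) *m v = (v^T *m F) *m (v^T *m F)^T.
Proof. by rewrite trmx_mul trmxK !mulmxA. Qed.

Lemma psd_gram n m (F : 'M[R]_(n, m)) : psd (F *m F^T).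
Proof.
split; first by rewrite /Defs.symmetricmx trmx_mul trmxK.
by move=> v; rewrite quad_gram sqr_row_ge0.
Qed.

Lemma psd0 n : psd (0 : 'M[R]_n).
Proof. by split; [rewrite /Defs.symmetricmx trmx0 | move=> v; rewrite mulmx0 mul0mx mxE]. Qed.

Lemma psd_add n (A B : 'M[R]_n) : psd A -> psd B -> psd (A + B).
Proof.
case=> sA pA [sB pB]; split; first by rewrite /Defs.symmetricmx linearD /= sA sB.
move=> v; rewrite mulmxDr mulmxDl mxE; apply: addr_ge0; [exact: pA|exact: pB].
Qed.

Lemma psd_congr n m (A : 'M[R]_n) (K : 'M[R]_(n, m)) : psd A -> psd (K^T *m A *m K).
Proof.
case=> sA pA; split; first by rewrite /Defs.symmetricmx !trmx_mul trmxK sA mulmxA.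
move=> v; have := pA (K *m v); by rewrite trmx_mul !mulmxA.
Qed.

Lemma pd_congr n m (P : 'M[R]_n) (K : 'M[R]_(n, m)) :
  posdef P -> K^T *m K = 1%:M -> posdef (K^T *m P *m K).
Proof.
case=> sP pP KK; split; first by rewrite /Defs.symmetricmx !trmx_mul trmxK sP mulmxA.
move=> v nv; have : K *m v != 0.
  apply: contra nv => /eqP Kv; apply/eqP.
  by rewrite -[v]mul1mx -KK -mulmxA Kv mulmx0.
by move=> /pP; rewrite trmx_mul !mulmxA.
Qed.

Lemma pd_inv n (P : 'M[R]_n) : posdef P -> posdef (invmx P).
Proof.
move=> pdP; have uP := pd_unit pdP; case: pdP => sP pP; split.
  by rewrite /Defs.symmetricmx trmx_inv sP.
move=> v nv; have : invmx P *m v != 0.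
  apply: contra nv => /eqP Pv; apply/eqP.
  by rewrite -(mulKVmx uP v) Pv mulmx0.
move=> /pP; rewrite trmx_mul trmx_inv sP -!mulmxA (mulmxA P) mulmxV // mul1mx.
by rewrite !mulmxA.
Qed.

Lemma pd_psd n (P : 'M[R]_n) : posdef P -> psd P.
Proof.
case=> sP pP; split => // v; have [->|nv] := eqVneq v 0.
  by rewrite mulmx0 mxE.
exact/ltW/pP.
Qed.

End Helpers.

Section Chol.
Variable R : realType.

Lemma quad_block n (a : 'M[R]_1) (b : 'M[R]_(1, n)) (D : 'M[R]_n) (x : 'M[R]_1) (v : 'cV[R]_n) :
  (col_mx x v)^T *m block_mx a b b^T D *m col_mx x v =
  x^T *m a *m x + x^T *m (b *m v) + (b *m v)^T *m x + v^T *m D *m v.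
Proof.
rewrite tr_col_mx mul_row_block mul_row_col !mulmxDl trmx_mul !mulmxA.
by rewrite -!addrA (addrCA (v^T *m b^T *m x)).
Qed.

Lemma chol n (P : 'M[R]_n) : posdef P -> exists L : 'M_n, P = L *m L^T.
Proof.
elim: n P => [|n IH] P pdP.
  by exists 0; apply/matrixP => i; case: i.
pose Q : 'M[R]_(1 + n) := P.
have [sQ pQ] : posdef Q := pdP.
set a := ulsubmx Q; set b := ursubmx Q; set D := drsubmx Q.
have EQ : Q = block_mx a b b^T D.
  by rewrite -[Q in LHS]submxK trmx_ursub sQ.
have sD : D^T = D by rewrite /D trmx_drsub sQ.
set al := a 0 0.
have Ea : a = al%:M by rewrite [a in LHS]mx11_scalar.
have alpos : 0 < al.
  have nz : col_mx (1 : 'M[R]_1) (0 : 'cV_n) != 0.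
    apply/eqP => /(congr1 usubmx); rewrite col_mxKu linear0 => /matrixP/(_ 0 0).
    by rewrite !mxE /=; apply/eqP; rewrite oner_eq0.
  have := pQ _ nz; rewrite EQ quad_block !mulmx0 trmx0 !mul0mx !addr0 trmx1 mul1mx mulmx1.
  by rewrite Ea mxE eqxx mulr1n.
set S := D - al^-1 *: (b^T *m b).
have pdS : posdef S.
  split.
    by rewrite /Defs.symmetricmx /S linearB /= sD linearZ /= trmx_mul trmxK.
  move=> v nv.
  pose x : 'M[R]_1 := (- al^-1) *: (b *m v).
  have nz : col_mx x v != 0.
    by apply: contra nv => /eqP/(congr1 dsubmx); rewrite col_mxKd linear0 => ->.
  have := pQ _ nz; rewrite EQ quad_block.
  suff -> : x^T *m a *m x + x^T *m (b *m v) + (b *m v)^T *m x + v^T *m D *m v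
            = v^T *m S *m v by [].
  rewrite /S /x Ea !linearZ /=.
  have E : v^T *m (b^T *m b) *m v = (b *m v)^T *m (b *m v) by rewrite trmx_mul !mulmxA.
  rewrite mulmxDr mulmxDl -scalemxAr mulmxN -!scalemxAl mulNmx E.
  rewrite mul_mx_scalar -!scalemxAl !scalerA.
  set B := _ *m (b *m v); set W := v^T *m D *m v.
  rewrite addrC; congr (_ + _).
  rewrite -!scalerDl scalerN -scaleNr; congr (_ *: _).
  have : al != 0 by rewrite gt_eqF.
  by move=> h; field.
have [L' EL'] := IH S pdS.
set s := Num.sqrt al.
have ss : s * s = al by rewrite -expr2 sqr_sqrtr // ltW.
have s0 : s != 0 by rewrite gt_eqF // sqrtr_gt0.
exists (block_mx s%:M 0 (s^-1 *: b^T) L' : 'M_(1 + n)).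
change (Q = block_mx s%:M 0 (s^-1 *: b^T) L' *m (block_mx s%:M 0 (s^-1 *: b^T) L')^T).
rewrite tr_block_mx mulmx_block EQ !trmx0 !mulmx0 !mul0mx !addr0 ?add0r tr_scalar_mx.
rewrite -EL' /S linearZ /= trmxK.
congr block_mx.
- by rewrite -scalar_mxM ss Ea.
- by rewrite mul_scalar_mx scalerA mulfV // scale1r.
- by rewrite mul_mx_scalar scalerA mulfV // scale1r.
- rewrite -scalemxAl -scalemxAr scalerA -invfM ss.
  by rewrite addrC subrK.
Qed.

End Chol.

Section Key.
Variable R : realType.

Lemma chol_unit n (P : 'M[R]_n) : posdef P -> exists2 L : 'M_n, P = L *m L^T & L \in unitmx.
Proof.
move=> pdP; have [L EL] := chol pdP; exists L => //.
by have := pd_unit pdP; rewrite EL unitmx_mul => /andP [].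
Qed.

Lemma rank_gram n m (W : 'M[R]_(n, m)) : \rank (W *m W^T) = \rank W.
Proof.
have := mxrank_mul_ker W W^T.
suff /eqP -> : (W :&: kermx W^T)%MS == 0 by rewrite mxrank0 addn0.
apply/rowV0P => v; rewrite sub_capmx => /andP [/submxP [x ->] /sub_kermxP h].
apply: sqr_row_eq0; rewrite trmx_mul mulmxA h mul0mx mxE //.
Qed.

Lemma colspace n m l (F : 'M[R]_(n, m)) (C : 'M[R]_(n, l)) :
  exists T : 'M[R]_(n, m), F = (F *m F^T + C *m C^T) *m T.
Proof.
pose W := row_mx F C.
have EW : W *m W^T = F *m F^T + C *m C^T by rewrite tr_row_mx mul_row_col.
have s1 : (W *m W^T <= W^T)%MS by apply: submxMl.
have : (W *m W^T == W^T)%MS.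
  by rewrite -(mxrank_leqif_eq s1).2 rank_gram mxrank_tr.
case/andP => _ s2.
have s3 : (F^T <= W *m W^T)%MS.
  apply: submx_trans s2; rewrite tr_row_mx -addsmxE; exact: addsmxSl.
case/submxP: s3 => D ED; exists D^T.
by rewrite -EW; apply: trmx_inj; rewrite ED !trmx_mul !trmxK.
Qed.


Lemma sqr_col_ge0 n (y : 'cV[R]_n) : 0 <= (y^T *m y) 0 0.
Proof. by have := sqr_row_ge0 y^T; rewrite trmxK. Qed.

Lemma entryB (A B : 'M[R]_1) : (A - B) 0 0 = A 0 0 - B 0 0.
Proof. by rewrite !mxE. Qed.
Lemma entryD (A B : 'M[R]_1) : (A + B) 0 0 = A 0 0 + B 0 0.
Proof. by rewrite !mxE. Qed.
Lemma entryT (A : 'M[R]_1) : A^T 0 0 = A 0 0.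
Proof. by rewrite !mxE. Qed.

Lemma key n m l s (F : 'M[R]_(n, m)) (C : 'M[R]_(n, l)) (X : 'M[R]_n) (Gm : 'M[R]_(m, s)) :
  (F *m F^T + C *m C^T) *m X *m (F *m F^T + C *m C^T) = F *m F^T + C *m C^T \/ X = 0 ->
  psd ((F *m Gm)^T *m X *m (F *m Gm)) /\
  psd (Gm^T *m Gm - (F *m Gm)^T *m X *m (F *m Gm)).
Proof.
set M := F *m F^T + C *m C^T => hX.
have psdGm : psd (Gm^T *m Gm) by have := psd_gram Gm^T; rewrite trmxK.
case: hX => [hX | ->]; last first.
  by rewrite mulmx0 mul0mx subr0; split => //; exact: psd0.
have [T ET] := colspace F C; rewrite -/M in ET.
have psdM : psd M by apply: psd_add; apply: psd_gram.
have sM : M^T = M by case: psdM.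
set H := T *m Gm.
have EF : F *m Gm = M *m H by rewrite ET mulmxA.
have EQ : (F *m Gm)^T *m X *m (F *m Gm) = H^T *m M *m H.
  by rewrite EF trmx_mul sM !mulmxA -(mulmxA _ M X) -(mulmxA _ (M *m X)) hX.
rewrite EQ; split; first exact: psd_congr.
split.
  by rewrite /Defs.symmetricmx linearB /= !trmx_mul !trmxK sM !mulmxA.

move=> v; rewrite mulmxBr mulmxBl entryB.
set y := Gm *m v; set t := H *m v.
set h := F^T *m t; set k := C^T *m t.
have E1 : v^T *m (Gm^T *m Gm) *m v = y^T *m y by rewrite /y trmx_mul !mulmxA.
have E2 : v^T *m (H^T *m M *m H) *m v = t^T *m M *m t by rewrite /t [(H *m v)^T]trmx_mul !mulmxA.
have E3 : t^T *m M *m t = h^T *m h + k^T *m k.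
  by rewrite /h /k [(F^T *m t)^T]trmx_mul [(C^T *m t)^T]trmx_mul !trmxK /M mulmxDr mulmxDl !mulmxA.
have E4 : t^T *m M *m t = h^T *m y.
  have Mt : M *m t = F *m y by rewrite /t /y mulmxA -EF mulmxA.
  by rewrite -mulmxA Mt /h [(F^T *m t)^T]trmx_mul trmxK mulmxA.
have E5 : ((y - h)^T *m (y - h)) 0 0 = (y^T *m y) 0 0 - 2 * (h^T *m y) 0 0 + (h^T *m h) 0 0.
  rewrite mulmxBr [(y - h)^T]linearB /= !mulmxBl !entryB.
  rewrite -[(y^T *m h) 0 0]entryT [(y^T *m h)^T]trmx_mul trmxK; ring.
have := sqr_col_ge0 (y - h); rewrite E5.
have := sqr_col_ge0 k; have := sqr_col_ge0 h.
have := congr1 (fun A : 'M[R]_1 => A 0 0) E3; have := congr1 (fun A : 'M[R]_1 => A 0 0) E4.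
rewrite /= entryD E1 E2 => e4 e3.
lra.
Qed.

End Key.

Section Tens.
Variable R : realType.

Lemma tens11 m n : (1%:M : 'M[R]_m) *t (1%:M : 'M[R]_n) = 1%:M.
Proof.
apply/matrixP => i j.
case: (mxtens_indexP i) => i1 i2; case: (mxtens_indexP j) => j1 j2.
rewrite tensmxE !mxE -natrM -!val_eqE /= eq_addl_mul ?ltn_ord //.
by rewrite xpair_eqE mulnb.
Qed.

Lemma avar_tens p r (c : 'cV[R]_r) (P : 'M[R]_p) (S : 'M[R]_r) :
  avar_c c (P *t S) = P *t (c^T *m S *m c).
Proof. by rewrite /avar_c !tensmx_mul mul1mx mulmx1. Qed.

Lemma mpinv_prop n (A : 'M[R]_n) : A *m mpinv A *m A = A \/ mpinv A = 0.
Proof.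
rewrite /mpinv; case: pselect => [ex|_]; last by right.
by left; have /and4P [/eqP -> _ _ _] := xchooseP ex.
Qed.

Lemma zmod_id (V : zmodType) (a x y e : V) :
  a + x + y - (e + e) = a + (x - e - (e - y)).
Proof. by rewrite opprB opprD !addrA (addrAC (a + x)). Qed.

End Tens.

Unset Implicit Arguments.

Theorem proposition3 (R : realType) (r p u k1 k2 : nat)
  (Sig : 'M[R]_r) (SigX : 'M[R]_p) (beta : 'M[R]_(r, p))
  (G : 'M[R]_(r, u)) (G01 : 'M[R]_(r, k1)) (G02 : 'M[R]_(r, k2))
  (c : 'cV[R]_r) :
  posdef Sig -> posdef SigX ->
  (* (G, G01, G02) is an orthogonal matrix *)
  G^T *m G = 1%:M -> G01^T *m G01 = 1%:M -> G02^T *m G02 = 1%:M ->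
  G^T *m G01 = 0 -> G^T *m G02 = 0 -> G01^T *m G02 = 0 ->
  G *m G^T + G01 *m G01^T + G02 *m G02^T = 1%:M ->
  (* span(G) is the Sigma-envelope of span(beta) *)
  is_envelope Sig beta G ->
  let U := row_mx G G01 in
  let G0 := row_mx G01 G02 in
  let eta := G^T *m beta in
  let Om := G^T *m Sig *m G in
  let Om0 := G0^T *m Sig *m G0 in
  let Om012 := G01^T *m Sig *m G02 in
  let M := Mmat eta Om Om0 SigX in
  let avar_cm := invmx SigX *t (U *m invmx (U^T *m invmx Sig *m U) *m U^T) in
  let avar_em := invmx SigX *t (G *m Om *m G^T)
                 + (eta^T *t G0) *m mpinv M *m (eta *t G0^T) in
  [/\ (c^T <= G^T)%MS -> avar_c c avar_cm = avar_c c avar_em,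
      (c^T <= G02^T)%MS -> loewner_le (avar_c c avar_cm) (avar_c c avar_em) &
      (c^T <= G01^T)%MS ->
        \rank M = \rank ((eta *m SigX *m eta^T) *t invmx Om0) ->
        Om012 = 0 ->
        loewner_le (avar_c c avar_em) (avar_c c avar_cm)].
Proof.
move=> pdS pdX GG G1G1 G2G2 GG1 GG2 G1G2 Id Env U G0 eta Om Om0 Om012 M acm aem.
have trz : forall m n (A : 'M[R]_(m, n)), A = 0 -> A^T = 0 by move=> m n A ->; rewrite trmx0.
have G1G : G01^T *m G = 0 by rewrite -[G]trmxK -trmx_mul GG1 trmx0.
have G2G : G02^T *m G = 0 by rewrite -[G]trmxK -trmx_mul GG2 trmx0.
have G2G1 : G02^T *m G01 = 0 by rewrite -[G01]trmxK -trmx_mul G1G2 trmx0.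
have sS : Sig^T = Sig by case: pdS.
have uS := pd_unit pdS.
have SG : Sig *m G = G *m Om.
  case: Env => red _ _; case/submxP: red => W EW.
  have E : Sig *m G = G *m W^T by rewrite -[Sig *m G]trmxK EW trmx_mul trmxK.
  by rewrite /Om -mulmxA E (mulmxA G^T) GG mul1mx.
have UtU : U^T *m U = 1%:M.
  by rewrite /U tr_row_mx mul_col_row GG GG1 G1G G1G1 -scalar_mx_block.
have G0tG0 : G0^T *m G0 = 1%:M.
  by rewrite /G0 tr_row_mx mul_col_row G1G1 G1G2 G2G1 G2G2 -scalar_mx_block.
have UUt : U *m U^T = G *m G^T + G01 *m G01^T by rewrite /U tr_row_mx mul_row_col.
have G0G0t : G0 *m G0^T = G01 *m G01^T + G02 *m G02^T by rewrite /G0 tr_row_mx mul_row_col.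
have pdOm : posdef Om := pd_congr pdS GG.
have pdOm0 : posdef Om0 := pd_congr pdS G0tG0.
set N := U^T *m invmx Sig *m U.
have uN : N \in unitmx := pd_unit (pd_congr (pd_inv pdS) UtU).
have [L EL uL] := chol_unit pdX.
have [P EP uP] := chol_unit pdOm.
have [Q EQ uQ] := chol_unit pdOm0.
have uPt : P^T \in unitmx by rewrite unitmx_tr.
have uQt : Q^T \in unitmx by rewrite unitmx_tr.
set K := invmx Q^T.
set F := (eta *m L) *t K.
set Xm := P *t K.
set Ym := invmx P^T *t Q.
have KK : K *m K^T = invmx Om0 by rewrite /K trmx_inv trmxK EQ invmxM.
have FF : F *m F^T = (eta *m SigX *m eta^T) *t invmx Om0.
  by rewrite /F trmx_tens tensmx_mul KK EL trmx_mul !mulmxA.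
have XX : Xm *m Xm^T = Om *t invmx Om0 by rewrite /Xm trmx_tens tensmx_mul KK -EP.
have YY : Ym *m Ym^T = invmx Om *t Om0.
  by rewrite /Ym trmx_tens tensmx_mul trmx_inv trmxK -EQ EP invmxM.
have XY : Xm *m Ym^T = 1%:M.
  by rewrite /Xm /Ym trmx_tens tensmx_mul trmx_inv trmxK mulmxV // /K mulVmx // tens11.
have YX : Ym *m Xm^T = 1%:M.
  by rewrite /Xm /Ym trmx_tens tensmx_mul mulVmx // /K trmx_inv trmxK mulmxV // tens11.
have two : (2%:R%:M : 'M[R]_(u * (k1 + k2))) = 1%:M + 1%:M.
  by apply/matrixP => i j; rewrite !mxE -mulrnDl.
have EM : M = F *m F^T + (Xm - Ym) *m (Xm - Ym)^T.
  rewrite /M /Mmat linearB /= mulmxBr !mulmxBl FF XX YY XY YX two.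
  exact: zmod_id.
set X := mpinv M.
have hX : (F *m F^T + (Xm - Ym) *m (Xm - Ym)^T) *m X *m (F *m F^T + (Xm - Ym) *m (Xm - Ym)^T)
   = F *m F^T + (Xm - Ym) *m (Xm - Ym)^T \/ X = 0 by rewrite -EM; exact: mpinv_prop.
have keyb : forall b : 'cV[R]_(k1 + k2),
    (F *m (invmx L *t (Q^T *m b)) = eta *t b) /\ ((invmx L *t (Q^T *m b))^T *m (invmx L *t (Q^T *m b)) = invmx SigX *t (b^T *m Om0 *m b)).
  move=> b; split.
    by rewrite /F tensmx_mul -mulmxA mulmxV // mulmx1 /K mulmxA mulVmx // mul1mx.
  rewrite trmx_tens tensmx_mul EL invmxM // ?unitmx_tr //; congr (_ *t _); first by congr (_ *m _); exact: trmx_inv.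
  by rewrite EQ trmx_mul trmxK !mulmxA.
have avem : avar_c c aem = invmx SigX *t (c^T *m (G *m Om *m G^T) *m c)
     + (eta *t (G0^T *m c))^T *m X *m (eta *t (G0^T *m c)).
  rewrite /avar_c /aem mulmxDr mulmxDl -/(avar_c c _) avar_tens; congr (_ + _).
  rewrite !mulmxA tensmx_mul mul1mx -!mulmxA tensmx_mul mulmx1 trmx_tens [(G0^T *m c)^T]trmx_mul trmxK.
  by rewrite -/X !mulmxA.
have avcm : avar_c c acm = invmx SigX *t (c^T *m (U *m invmx N *m U^T) *m c) by exact: avar_tens.
have gen : forall s (V : 'M[R]_(r, s)) (D : 'M[R]_s), Sig *m V = V *m D ->
    U *m U^T *m V = V -> U *m invmx N *m U^T *m V = V *m D.
  move=> s V D SV UV.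
  have h : N *m (U^T *m V *m D) = U^T *m V.
    have e1 : N *m (U^T *m V *m D) = U^T *m invmx Sig *m (U *m U^T *m V) *m D by rewrite /N !mulmxA.
    by rewrite e1 UV -mulmxA -SV mulmxA -(mulmxA U^T) mulVmx // mulmx1.
  have h2 : invmx N *m (U^T *m V) = U^T *m V *m D by rewrite -[in LHS]h mulKmx.
  by rewrite -!mulmxA h2 !mulmxA UV.
have UUtG : U *m U^T *m G = G.
  by rewrite UUt mulmxDl -!mulmxA GG G1G !mulmx1 mulmx0 addr0.
have UUtG1 : U *m U^T *m G01 = G01.
  by rewrite UUt mulmxDl -!mulmxA GG1 G1G1 mulmx0 mulmx1 add0r.
have psdkey := fun s (Gm : 'M[R]_(p * (k1 + k2), s)) => @key R _ _ _ _ F (Xm - Ym) X Gm hX.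
split.
- move=> /submxP [a Ea].
  have Ec : c = G *m a^T by rewrite -[c]trmxK Ea trmx_mul trmxK.
  rewrite avcm avem.
  have b0 : G0^T *m c = 0 by rewrite Ec mulmxA /G0 tr_row_mx mul_col_mx G1G G2G col_mx0 mul0mx.
  rewrite b0 tensmx0 mulmx0 addr0; congr (_ *t _).
  rewrite Ea Ec.
  have -> : a *m G^T *m (U *m invmx N *m U^T) *m (G *m a^T)
      = a *m G^T *m (U *m invmx N *m U^T *m G) *m a^T by rewrite !mulmxA.
  rewrite (gen _ _ _ SG UUtG) !mulmxA -(mulmxA a G^T G) GG mulmx1.
  by rewrite -(mulmxA (a *m G^T *m Sig *m G) G^T G) GG mulmx1.
- move=> /submxP [a Ea].
  have cU : c^T *m U = 0 by rewrite Ea -mulmxA /U mul_mx_row G2G G2G1 row_mx0 mulmx0.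
  have cG : c^T *m G = 0 by rewrite Ea -mulmxA G2G mulmx0.
  rewrite /loewner_le avcm avem.
  rewrite !mulmxA cU cG !mul0mx !tensmx0 add0r subr0.
  have [e1 _] := keyb (G0^T *m c).
  rewrite -e1; by case: (psdkey _ (invmx L *t (Q^T *m (G0^T *m c)))).
- move=> /submxP [a Ea] _ h012.
  have Ec : c = G01 *m a^T by rewrite -[c]trmxK Ea trmx_mul trmxK.
  have cG : c^T *m G = 0 by rewrite Ea -mulmxA G1G mulmx0.
  have h012' : G01^T *m Sig *m G02 = 0 := h012.
  set Om011 := G01^T *m Sig *m G01.
  have SG1 : Sig *m G01 = G01 *m Om011.
    have e1 : G^T *m Sig *m G01 = 0.
      have -> : G^T *m Sig = (Sig *m G)^T by rewrite trmx_mul sS.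
      by rewrite SG trmx_mul -mulmxA GG1 mulmx0.
    have e2 : G02^T *m Sig *m G01 = 0.
      by apply: trmx_inj; rewrite trmx0 !trmx_mul trmxK sS mulmxA h012'.
    rewrite -[Sig *m G01]mul1mx -Id !mulmxDl -!mulmxA !(mulmxA G^T) !(mulmxA G02^T) e1 e2.
    by rewrite !mulmx0 add0r addr0 (mulmxA G01^T).
  have G0c : G0 *m (G0^T *m c) = c.
    rewrite Ec !mulmxA G0G0t mulmxDl -(mulmxA G01) -(mulmxA G02) G1G1 G2G1.
    by rewrite mulmx1 mulmx0 addr0.
  have cG0 : c^T *m G0 *m G0^T = c^T by apply: trmx_inj; rewrite !trmx_mul !trmxK G0c.
  have bOb : (G0^T *m c)^T *m Om0 *m (G0^T *m c) = a *m Om011 *m a^T.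
    rewrite [(G0^T *m c)^T]trmx_mul trmxK /Om0.
    have -> : c^T *m G0 *m (G0^T *m Sig *m G0) *m (G0^T *m c)
       = c^T *m G0 *m G0^T *m Sig *m (G0 *m (G0^T *m c)) by rewrite !mulmxA.
    by rewrite cG0 G0c Ea Ec !mulmxA.
  rewrite /loewner_le avcm avem.
  rewrite [c^T *m (G *m Om *m G^T)]mulmxA [c^T *m (G *m Om)]mulmxA cG !mul0mx tensmx0 add0r.
  have -> : c^T *m (U *m invmx N *m U^T) *m c = a *m Om011 *m a^T.
    have -> : c^T *m (U *m invmx N *m U^T) *m c = c^T *m (U *m invmx N *m U^T *m G01) *m a^T.
      by rewrite Ec !mulmxA.
    by rewrite (gen _ _ _ SG1 UUtG1) Ea !mulmxA -(mulmxA a G01^T G01) G1G1 mulmx1.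
  have [e1 e2] := keyb (G0^T *m c).
  rewrite -bOb -e2 -e1; by case: (psdkey _ (invmx L *t (Q^T *m (G0^T *m c)))).
Qed.
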